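(* Let $G$ be a finite simple graph with edge weight function $w$ and vertex weight function $w_1$, and let $u,v$ be distinct vertices of $G$. Writing $\eta=\eta_{(w,w_1)}$, $$\eta(G\setminus u,x)\,\eta(G\setminus v,x)-\eta(G,x)\,\eta(G\setminus uv,x)=\sum_{p\in P_{uv}(G)}\big(|w(p)|\,\eta(G\setminus p,x)\big)^2,$$ where $P_{uv}(G)$ is the set of all paths in $G$ with endpoints $u$ and $v$, $|w(p)|=\prod_{e\in E(p)}|w(e)|$, and $G\setminus p$ denotes $G$ with all vertices of $p$ deleted.
   Context: An edge weight function $w$ assigns a nonzero complex number to each edge; a vertex weight function $w_1$ assigns a real number (possibly $0$) to each vertex; subgraphs carry restricted weights; deleting vertices also deletes incident edges, and $G\setminus uv$ deletes both $u$ and $v$. For $A\subseteq E(G)$, $w(A)=\prod_{e\in A}w(e)$. $\mu_w(G,x)=\sum_{M}(-1)^{|M|}|w(M)|^2x^{n-2|M|}$ over all matchings $M$ (including empty). $\eta_{(w,w_1)}(G,x)=\sum_{S\subseteq V(G)}(-1)^{|V(G)\setminus S|}\big(\prod_{y\in V(G)\setminus S}w_1(y)\big)\mu_w(G[S],x)$ with $G[S]$ the induced subgraph; $\mu_w,\eta_{(w,w_1)}$ of the empty graph equal $1$. *)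

(* Defs.v *)
(* Graph: vertex type T : finType, adjacency e : rel T
   (assumed symmetric and irreflexive in the theorem). *)
From HB Require Import structures.
From mathcomp Require Import all_boot all_order all_algebra.
From mathcomp Require Import algC.
Set Implicit Arguments. Unset Strict Implicit. Unset Printing Implicit Defensive.
Import Order.TTheory GRing.Theory Num.Theory.
Local Open Scope ring_scope.

Section Eta.
Variables (T : finType) (e : rel T).

Definition gedges : {set {set T}} :=
  [set A : {set T} | [exists x, exists y, e x y && (A == [set x; y])]].

Definition is_matching (S : {set T}) (M : {set {set T}}) : bool :=
  [forall A in M, (A \in gedges) && (A \subset S)] &&
  [forall A in M, forall B in M, (A != B) ==> [disjoint A & B]].

Variables (w : {set T} -> algC) (w1 : T -> algC).

Definition mu_w (S : {set T}) : {poly algC} :=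
  \sum_(M : {set {set T}} | is_matching S M)
     ((-1) ^+ #|M| * \prod_(A in M) (`|w A| ^+ 2)) *: 'X^(#|S| - 2 * #|M|).

Definition etaw (S : {set T}) : {poly algC} :=
  \sum_(S' : {set T} | S' \subset S)
     ((-1) ^+ #|S :\: S'| * \prod_(y in S :\: S') w1 y) *: mu_w S'.

(* u :: t is a path in G from u to v (as a vertex sequence) *)
Definition is_uv_path (u v : T) (t : seq T) : bool :=
  [&& path e u t, uniq (u :: t) & last u t == v].

Definition path_absw (u : T) (t : seq T) : algC :=
  \prod_(ab <- zip (u :: t) t) `|w [set ab.1; ab.2]|.

Definition del_path (u : T) (t : seq T) : {set T} :=
  [set x | x \notin u :: t].

End Eta.

(* Main.v *)
Require Import Defs.
From HB Require Import structures.
From mathcomp Require Import all_boot all_order all_algebra.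
From mathcomp Require Import algC.
From mathcomp Require Import zify ring.
Set Implicit Arguments. Unset Strict Implicit. Unset Printing Implicit Defensive.
Import Order.TTheory GRing.Theory Num.Theory.
Local Open Scope ring_scope.

Section Proofs.
Variables (T : finType) (e : rel T).
Hypothesis e_sym : symmetric e.
Hypothesis e_irr : irreflexive e.
Variables (w : {set T} -> algC) (w1 : T -> algC).

Lemma is_matchingP (S : {set T}) (M : {set {set T}}) : reflect
  ((forall A, A \in M -> (A \in gedges e) && (A \subset S)) /\
   (forall A B, A \in M -> B \in M -> A != B -> [disjoint A & B]))
  (is_matching e S M).
Proof.
apply: (iffP andP) => [[/forall_inP H1 /forall_inP H2]|[H1 H2]]; split.
- exact: H1.
- by move=> A B /H2 /forall_inP H /H /implyP.
- by apply/forall_inP.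
- apply/forall_inP => A /H2 H; apply/forall_inP => B /H H'; exact/implyP.
Qed.

Lemma gedgesP (A : {set T}) : reflect (exists x y, e x y /\ A = [set x; y]) (A \in gedges e).
Proof.
rewrite inE; apply: (iffP existsP) => [[x /existsP [y /andP [H /eqP ->]]]|[x [y [H ->]]]].
  by exists x, y.
by exists x; apply/existsP; exists y; rewrite H eqxx.
Qed.

Lemma edge_neq x y : e x y -> x != y.
Proof. by move=> H; apply/eqP => E; rewrite E e_irr in H. Qed.

Lemma card_edge (A : {set T}) : A \in gedges e -> #|A| = 2%N.
Proof. by case/gedgesP=> x [y [H ->]]; rewrite cards2 edge_neq. Qed.

Lemma edge2 u k : [set u; k] \in gedges e -> e u k.
Proof.
move=> hE; have := card_edge hE; rewrite cards2.
case: eqP => // uk _.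
case/gedgesP: hE => x [y [H E]].
have hu : u \in [set x; y] by rewrite -E !inE eqxx.
have hk : k \in [set x; y] by rewrite -E !inE eqxx orbT.
move: hu hk; rewrite !inE => /orP[/eqP ux|/eqP uy] /orP[/eqP kx|/eqP ky].
- by case: uk; rewrite ux kx.
- by rewrite ux ky.
- by rewrite uy kx e_sym.
- by case: uk; rewrite uy ky.
Qed.

Lemma matching_card (S : {set T}) (M : {set {set T}}) : is_matching e S M -> (2 * #|M| <= #|S|)%N.
Proof.
case/is_matchingP => H1 H2.
have tM : trivIset M by apply/trivIsetP => A B hA hB; apply: H2.
have: cover M \subset S by apply/bigcupsP => A /H1 /andP[].
move/subset_leq_card; apply: leq_trans.
rewrite -(eqP tM) (eq_bigr (fun _ => 2%N)); last by move=> A /H1 /andP[/card_edge].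
by rewrite sum_nat_const mulnC.
Qed.

Lemma uniq_partner (S : {set T}) (M : {set {set T}}) u k k0 : is_matching e S M ->
  [set u; k] \in M -> [set u; k0] \in M -> k = k0.
Proof.
case/is_matchingP => H1 H2 hk hk0.
case: (eqVneq [set u; k] [set u; k0]) => E.
  have: k \in [set u; k0] by rewrite -E !inE eqxx orbT.
  rewrite !inE => /orP[/eqP ku|/eqP //].
  have /andP[/edge2] := H1 _ hk.
  by rewrite ku e_irr.
have := H2 _ _ hk hk0 E.
move/disjointFr => /(_ u); rewrite !inE !eqxx => /(_ isT) //.
Qed.

Definition ew u k : algC := if e u k then `|w [set u; k]| ^+ 2 else 0.
Definition Fm (S : {set T}) (M : {set {set T}}) : {poly algC} :=
  ((-1) ^+ #|M| * \prod_(A in M) (`|w A| ^+ 2)) *: 'X^(#|S| - 2 * #|M|).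
Definition free u (M : {set {set T}}) := [forall k, [set u; k] \notin M].

Lemma muE S : mu_w e w S = \sum_(M | is_matching e S M) Fm S M.
Proof. by []. Qed.

Lemma split_term (S : {set T}) M u : is_matching e S M ->
  Fm S M = (if free u M then Fm S M else 0) + \sum_(k | [set u; k] \in M) Fm S M.
Proof.
move=> hM; case: (boolP (free u M)) => fr.
  rewrite big_pred0 ?addr0 // => k; exact/negbTE/(forallP fr k).
move/forallPn: fr => [k0 /negbNE Hk0].
rewrite add0r (big_pred1 k0) // => k /=.
apply/idP/eqP => [Hk|->//]; exact: uniq_partner hM Hk Hk0.
Qed.

Lemma free_match (S : {set T}) M u : u \in S ->
  (is_matching e S M && free u M) = is_matching e (S :\ u) M.
Proof.
move=> uS; apply/idP/idP.
  case/andP => /is_matchingP [H1 H2] fr; apply/is_matchingP; split => // A hA.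
  have /andP[eA sA] := H1 _ hA; rewrite eA /=.
  apply/subsetP => x xA; rewrite !inE (subsetP sA x xA) andbT.
  apply/eqP => xu; subst x.
  case/gedgesP: eA => a [b [ab EA]]; move: xA hA; rewrite EA !inE.
  case/orP => /eqP ua hA.
    by move: (forallP fr b); rewrite ua hA.
  by move: (forallP fr a); rewrite ua setUC hA.
case/is_matchingP => H1 H2; apply/andP; split.
  apply/is_matchingP; split => // A /H1 /andP[-> sA] /=.
  by apply: subset_trans sA _; apply/subsetP => x; rewrite !inE => /andP[].
apply/forallP => k; apply/negP => /H1 /andP[_ /subsetP /(_ u)].
by rewrite !inE eqxx /= => /(_ isT).
Qed.

Lemma Fm_free (S : {set T}) M u : u \in S -> is_matching e (S :\ u) M ->
  Fm S M = 'X * Fm (S :\ u) M.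
Proof.
move=> uS hM; rewrite /Fm.
have := matching_card hM; have := cardsD1 u S; rewrite uS.
move: #|S :\ u| #|S| #|M| => n s m -> hle.
rewrite (_ : (1 + n - 2 * m = (n - 2 * m).+1)%N); last by lia.
by rewrite exprS -!mul_polyC mulrCA.
Qed.

Lemma disj_pair (S : {set T}) u k (B : {set T}) : B \subset S :\ u :\ k -> [disjoint [set u; k] & B].
Proof.
move=> sB; rewrite disjoint_subset; apply/subsetP => x; rewrite !inE.
case/orP => /eqP -> ; apply/negP => /(subsetP sB); rewrite !inE eqxx //=.
by rewrite andbF.
Qed.

Lemma match_add (S : {set T}) M u k : e u k -> u \in S -> k \in S ->
  is_matching e S ([set u; k] |: M) && ([set u; k] \notin M) =
  is_matching e (S :\ u :\ k) M.
Proof.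
move=> euk uS kS; set A := [set u; k].
have eA : A \in gedges e by apply/gedgesP; exists u, k.
have sAS : A \subset S by apply/subsetP => x; rewrite !inE => /orP[] /eqP ->.
apply/idP/idP.
  case/andP => /is_matchingP [H1 H2] nA; apply/is_matchingP; split.
    move=> B hB; have hB' : B \in A |: M by rewrite setU1r.
    have /andP[eB sB] := H1 _ hB'.
    have ne : A != B by apply: contraNneq nA => ->.
    have dj := H2 _ _ (setU11 A M) hB' ne.
    have uB : u \notin B by rewrite (disjointFr dj) // !inE eqxx.
    have kB : k \notin B by rewrite (disjointFr dj) // !inE eqxx orbT.
    rewrite eB /=; apply/subsetP => x xB.
    by rewrite !inE (subsetP sB x xB) andbT (memPn uB) // (memPn kB).
  move=> B C hB hC; apply: H2; exact: setU1r.
case/is_matchingP => H1 H2.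
have nA : A \notin M.
  apply/negP => /H1 /andP[_ /subsetP /(_ u)]; rewrite !inE eqxx /=.
  by rewrite andbF => /(_ isT).
rewrite nA andbT; apply/is_matchingP; split.
  move=> B; rewrite in_setU1 => /orP[/eqP->|hB]; first by rewrite eA sAS.
  have /andP[-> sB] := H1 _ hB; apply: subset_trans sB _.
  by apply/subsetP => x; rewrite !inE => /andP[_ /andP[]].
have dA B : B \in M -> [disjoint A & B].
  by move=> /H1 /andP[_ sB]; apply: disj_pair sB.
move=> B C; rewrite !in_setU1 => /orP[/eqP->|hB] /orP[/eqP->|hC].
- by rewrite eqxx.
- by move=> _; apply: dA.
- by move=> _; rewrite disjoint_sym; apply: dA.
- exact: H2.
Qed.

Lemma part_k (S : {set T}) u k : u \in S ->
  \sum_(M | is_matching e S M && ([set u; k] \in M)) Fm S M =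
  if (k \in S :\ u) && e u k then - ((ew u k)%:P * mu_w e w (S :\ u :\ k)) else 0.
Proof.
move=> uS; case: ifP => [/andP[kSu euk] | hk]; last first.
  apply: big_pred0 => M; apply/negP => /andP[/is_matchingP[H1 _] hA].
  have /andP[/edge2 ek sA] := H1 _ hA.
  move/negP: hk; apply; rewrite ek andbT !inE eq_sym (edge_neq ek) /=.
  by rewrite (subsetP sA) // !inE eqxx orbT.
have kS : k \in S by move: kSu; rewrite !inE => /andP[].
set A := [set u; k].
rewrite (reindex_onto (fun M' => A |: M') (fun M => M :\ A)) /=; last first.
  by move=> M /andP[_ hA]; rewrite setD1K.
rewrite muE big_distrr /= -sumrN.
apply: eq_big => M'.
  rewrite setU11 andbT.
  have -> : ((A |: M') :\ A == M') = (A \notin M').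
    by apply/eqP/idP => [<-|hn]; [rewrite setD11 | rewrite setU1K].
  exact: match_add.
case/andP => _ /eqP E.
have nA : A \notin M' by rewrite -E setD11.
rewrite /Fm cardsU1 nA big_setU1 //= /ew euk.
have := cardsD1 u S; have := cardsD1 k (S :\ u); rewrite uS kSu.
move: #|S :\ u :\ k| #|S :\ u| #|S| #|M'| => n1 n2 s m -> ->.
rewrite (_ : (1 + (1 + n1) - 2 * (1 + m) = n1 - 2 * m)%N); last by lia.
set a := `|w A| ^+ 2; set p := \prod_(i in M') _.
rewrite (_ : (-1) ^+ (1 + m) * (a * p) = - (a * ((-1) ^+ m * p))); last first.
  by rewrite exprD expr1; ring.
by rewrite -!mul_polyC polyCN mulNr polyCM mulrA.
Qed.

Lemma mu_rec (S : {set T}) u : u \in S ->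
  mu_w e w S = 'X * mu_w e w (S :\ u)
    - \sum_(k in S :\ u) (ew u k)%:P * mu_w e w (S :\ u :\ k).
Proof.
move=> uS.
rewrite muE (eq_bigr _ (fun M hM => split_term u hM)) big_split /=.
rewrite -big_mkcondr.
rewrite (eq_big (fun M => is_matching e (S :\ u) M) (fun M => 'X * Fm (S :\ u) M)); first last.
- by move=> M /andP[hM fr]; apply: Fm_free; rewrite // -free_match // hM.
- by move=> M; rewrite free_match.
rewrite -big_distrr /= -muE; congr (_ + _).
rewrite (exchange_big_dep xpredT) //=.
under eq_bigr => k _ do rewrite part_k //.
rewrite -sumrN [RHS]big_mkcond /=; apply: eq_bigr => k _.
rewrite /ew; case: (k \in S :\ u) => //=; case: (e u k) => //.
by rewrite mul0r oppr0.
Qed.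

Definition dd (S S' : {set T}) : algC :=
  (-1) ^+ #|S :\: S'| * \prod_(y in S :\: S') w1 y.

Lemma etaE (S : {set T}) : etaw e w w1 S = \sum_(S' : {set T} | S' \subset S) dd S S' *: mu_w e w S'.
Proof. by []. Qed.

Lemma sum_notin (S : {set T}) k (G : {set T} -> {poly algC}) : k \in S ->
  \sum_(S' : {set T} | (S' \subset S) && (k \notin S')) dd S S' *: G S' =
  - (w1 k)%:P * \sum_(R : {set T} | R \subset S :\ k) dd (S :\ k) R *: G R.
Proof.
move=> kS; rewrite big_distrr /=; apply: eq_big => [R|R hR]; first by rewrite subsetD1.
case/andP: hR => sR kR.
have E : S :\: R = k |: ((S :\ k) :\: R).
  apply/setP => x; rewrite !inE; case: (eqVneq x k) => [->|] //=.
  by rewrite kS kR.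
have kn : k \notin (S :\ k) :\: R by rewrite !inE eqxx andbF.
rewrite /dd E cardsU1 big_setU1 //= kn -!mul_polyC exprD expr1 !polyCM polyCN.
ring.
Qed.

Lemma sum_in (S : {set T}) k (G : {set T} -> {poly algC}) : k \in S ->
  \sum_(S' : {set T} | (S' \subset S) && (k \in S')) dd S S' *: G (S' :\ k) =
  \sum_(R : {set T} | R \subset S :\ k) dd (S :\ k) R *: G R.
Proof.
move=> kS.
rewrite (reindex_onto (fun R => k |: R) (fun S' => S' :\ k)) /=; last first.
  by move=> S' /andP[_ kS']; rewrite setD1K.
apply: eq_big => R.
  rewrite setU11 andbT subUset sub1set kS /= subsetD1.
  case: (boolP (k \in R)) => kR; last by rewrite setU1K // eqxx.
  rewrite andbF; apply/negbTE; rewrite negb_and; apply/orP; right.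
  apply/eqP => E; by rewrite -E !inE eqxx in kR.
move=> /andP[_ /eqP E]; have kR : k \notin R by rewrite -E setD11.
rewrite setU1K //; congr (_ *: _); rewrite /dd.
have -> : S :\: (k |: R) = (S :\ k) :\: R.
  by apply/setP => x; rewrite !inE negb_or; case: (x == k); case: (x \in R).
by [].
Qed.

Lemma key2 u (S' : {set T}) :
  \sum_(R : {set T} | R \subset S') dd S' R *: \sum_(k in R) (ew u k)%:P * mu_w e w (R :\ k) =
  \sum_(k in S') (ew u k)%:P * etaw e w w1 (S' :\ k).
Proof.
under eq_bigr do rewrite scaler_sumr.
rewrite (exchange_big_dep (mem S')) /=; last first.
  by move=> R k sR kR; exact: (subsetP sR k kR).
apply: eq_bigr => k kS'.
have := @sum_in S' k (fun R => (ew u k)%:P * mu_w e w R) kS'.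
rewrite /= => ->.
rewrite etaE big_distrr /=; apply: eq_bigr => R _.
by rewrite -!mul_polyC mulrCA.
Qed.

Lemma eta_rec (S : {set T}) u : u \in S ->
  etaw e w w1 S = ('X - (w1 u)%:P) * etaw e w w1 (S :\ u)
    - \sum_(k in S :\ u) (ew u k)%:P * etaw e w w1 (S :\ u :\ k).
Proof.
move=> uS; rewrite etaE (bigID (fun S' : {set T} => u \in S')) /=.
rewrite sum_notin // -etaE.
have -> : \sum_(S' : {set T} | (S' \subset S) && (u \in S')) dd S S' *: mu_w e w S' =
  \sum_(S' : {set T} | (S' \subset S) && (u \in S')) dd S S' *:
     ('X * mu_w e w (S' :\ u) - \sum_(k in S' :\ u) (ew u k)%:P * mu_w e w (S' :\ u :\ k)).
  by apply: eq_bigr => S' /andP[_ uS']; rewrite -mu_rec.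
have := @sum_in S u (fun R => 'X * mu_w e w R - \sum_(k in R) (ew u k)%:P * mu_w e w (R :\ k)) uS.
rewrite /= => ->.
under eq_bigr do rewrite scalerBr.
rewrite sumrB key2.
have -> : \sum_(i : {set T} | i \subset S :\ u) dd (S :\ u) i *: ('X * mu_w e w i) =
   'X * etaw e w w1 (S :\ u).
  rewrite etaE big_distrr /=; apply: eq_bigr => R _.
  by rewrite -!mul_polyC mulrCA.
ring.
Qed.

Definition Dl (S : {set T}) u (t : seq T) : {set T} := [set x in S | x \notin u :: t].
Definition Pt N (S : {set T}) u v : {poly algC} :=
  \sum_(n < N) \sum_(t : n.-tuple T | is_uv_path e u v t && all (fun x => x \in S) (u :: t))
     ((path_absw w u t) ^+ 2)%:P * etaw e w w1 (Dl S u t) ^+ 2.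

Lemma big_tuple_cons (R : Type) (idx : R) (op : Monoid.com_law idx) n
  (P : pred (n.+1.-tuple T)) (F : n.+1.-tuple T -> R) :
  \big[op/idx]_(t : n.+1.-tuple T | P t) F t =
  \big[op/idx]_(k : T) \big[op/idx]_(t : n.-tuple T | P [tuple of k :: t]) F [tuple of k :: t].
Proof.
rewrite pair_big_dep /=.
rewrite (reindex (fun p : T * n.-tuple T => [tuple of p.1 :: p.2])) /=.
  by apply: eq_bigl.
exists (fun t : n.+1.-tuple T => (thead t, [tuple of behead t])) => [[k t]|t] _ /=.
  by congr pair; apply: val_inj.
by rewrite [in RHS](tuple_eta t); apply: val_inj.
Qed.

Lemma no_loop v (s : seq T) : s != [::] -> is_uv_path e v v s = false.
Proof.
case: s => [//|x s] _; apply/negP => /and3P[_ /andP[vn _] /eqP E].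
move: vn; have -> : v = last x s by rewrite -E.
by rewrite mem_last.
Qed.

Lemma all_D1 (S : {set T}) u (s : seq T) :
  all (fun x => x \in S :\ u) s = (u \notin s) && all (fun x => x \in S) s.
Proof.
elim: s => //= x s ->; rewrite !inE negb_or [u == x]eq_sym.
by case: (x == u); case: (x \in S); case: (u \in s).
Qed.

Lemma Pt_vv N (S : {set T}) v : (0 < N)%N -> v \in S ->
  Pt N S v v = etaw e w w1 (S :\ v) ^+ 2.
Proof.
case: N => // N _ vS; rewrite /Pt big_ord_recl /=.
rewrite [X in _ + X]big1 ?addr0; last first.
  move=> i _; apply: big_pred0 => t; rewrite no_loop //.
  by rewrite -size_eq0 size_tuple.
rewrite (big_pred1 [tuple]); last first.
  by move=> t; rewrite (tuple0 t) /is_uv_path /= vS eqxx.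
rewrite /path_absw /= big_nil expr1n mul1r; congr (etaw _ _ _ _ ^+ 2).
by apply/setP => x; rewrite !inE andbC.
Qed.

Lemma Pt_step N (S : {set T}) u v : u != v -> u \in S ->
  Pt N.+1 S u v = \sum_(k in S :\ u) (ew u k)%:P * Pt N (S :\ u) k v.
Proof.
move=> huv uS; rewrite /Pt big_ord_recl big_pred0 ?add0r; last first.
  by move=> t; rewrite (tuple0 t) /is_uv_path /= (negbTE huv).
under [RHS]eq_bigr do rewrite big_distrr.
rewrite [RHS](exchange_big) /=; apply: eq_bigr => i _.
rewrite big_tuple_cons.
rewrite [RHS]big_mkcond; apply: eq_bigr => k _ /=.
case: (boolP (k \in S :\ u)) => kSu; last first.
  apply: big_pred0 => t /=; apply/negP.
  case/and3P => /and3P[_ /andP[nu _] _] _ /andP[kS _].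
  move: kSu nu; rewrite !inE kS negb_or eq_sym => /negP nk /andP[ku _].
  by apply: nk; rewrite ku.
case: (boolP (e u k)) => euk; last first.
  rewrite big_pred0; last by move=> t; rewrite /is_uv_path /= (negbTE euk).
  by rewrite /ew (negbTE euk) mul0r.
rewrite big_distrr /=; apply: eq_big => t.
  rewrite /is_uv_path /= euk uS all_D1 /=.
  have kS : k \in S by move: kSu; rewrite !inE => /andP[].
  have uk : (u == k) = false by move: kSu; rewrite !inE eq_sym => /andP[/negbTE].
  rewrite in_cons uk kS /=.
  by case: (path e k t); case: (k \in t); case: (uniq t); case: (last k t == v);
    case: (u \in t); case: (all _ t).
move=> _.
have -> : Dl S u (k :: t) = Dl (S :\ u) k t.
  apply/setP => x; rewrite !inE.
  by case: (x == u); case: (x == k); case: (x \in t); case: (x \in S).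
rewrite /path_absw /= big_cons /= /ew euk.
by rewrite exprMn polyCM mulrA.
Qed.

Lemma setD1C (S : {set T}) a b : S :\ a :\ b = S :\ b :\ a.
Proof. by apply/setP => x; rewrite !inE; case: (x == a); case: (x == b). Qed.

Lemma main_id N (S : {set T}) u v : u \in S -> v \in S -> u != v -> (#|S| <= N)%N ->
  etaw e w w1 (S :\ u) * etaw e w w1 (S :\ v)
  - etaw e w w1 S * etaw e w w1 (S :\ u :\ v) = Pt N S u v.
Proof.
elim: N S u => [|N IH] S u uS vS huv hN.
  by move: hN; rewrite leqn0 => /eqP/cards0_eq Sz; rewrite Sz inE in uS.
have vSu : v \in S :\ u by rewrite !inE eq_sym huv vS.
have cS := cardsD1 u S; have cSu := cardsD1 v (S :\ u).
rewrite uS vSu in cS cSu.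
rewrite Pt_step // (bigD1 v) //= Pt_vv //; last by lia.
set E := etaw e w w1 (S :\ u); set Ev := etaw e w w1 (S :\ u :\ v).
rewrite (eq_bigr (fun k => (ew u k)%:P * etaw e w w1 (S :\ u :\ k) * Ev
   - E * ((ew u k)%:P * etaw e w w1 (S :\ u :\ k :\ v)))); last first.
  move=> k /andP[kSu kv]; rewrite -IH //; last by lia.
  by rewrite /E /Ev; ring.
rewrite sumrB -big_distrl -big_distrr /=.
have uSv : u \in S :\ v by rewrite !inE huv uS.
rewrite (eta_rec uS) (eta_rec uSv) -/E [S :\ v :\ u]setD1C -/Ev.
rewrite [in X in _ - X = _](bigD1 v) //=.
have -> : \sum_(k in S :\ u :\ v) (ew u k)%:P * etaw e w w1 (S :\ u :\ v :\ k) =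
  \sum_(k in S :\ u | k != v) (ew u k)%:P * etaw e w w1 (S :\ u :\ k :\ v).
  apply: eq_big => [k|k _]; first by rewrite in_setD1 andbC.
  by rewrite setD1C.
rewrite -/Ev; ring.
Qed.

End Proofs.

Theorem lemma4p5 (T : finType) (e : rel T)
  (e_sym : symmetric e) (e_irr : irreflexive e)
  (w : {set T} -> algC) (w1 : T -> algC)
  (w_nz : forall A, A \in gedges e -> w A != 0)
  (w1_real : forall y, w1 y \is Num.real)
  (u v : T) (huv : u != v) :
  etaw e w w1 ([set: T] :\ u) * etaw e w w1 ([set: T] :\ v)
  - etaw e w w1 [set: T] * etaw e w w1 ([set: T] :\ u :\ v)
  = \sum_(n < #|T|) \sum_(t : n.-tuple T | is_uv_path e u v t)
      ((path_absw w u t)%:P * etaw e w w1 (del_path u t)) ^+ 2.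
Proof.
rewrite (@main_id T e e_sym e_irr w w1 #|T|) ?inE ?max_card //.
rewrite /Pt; apply: eq_bigr => n _; apply: eq_big => t.
  by rewrite (_ : all _ _ = true) ?andbT //; apply/allP => x; rewrite inE.
move=> _; rewrite exprMn -rmorphXn; congr (_ * etaw _ _ _ _ ^+ 2).
by apply/setP => x; rewrite !inE.
Qed.
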